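(* For every integer $k\ge 2$, the set of maximal simplices of $\mathrm{VR}(T_{3k,3k};k)$ equals $M_{3k,k}\cup N_{3k,k}$, where \[N_{3k,k}=\big\{\{([a],[b]),([a+k],[b]),([a+2k],[b])\},\ \{([a],[b]),([a],[b+k]),([a],[b+2k])\} : 0\le a,b\le 3k-1\big\}.\] For every integer $k\ge 3$, the set of maximal simplices of $\mathrm{VR}(T_{3k-1,3k-1};k)$ equals $M_{3k-1,k}\cup N_{3k-1,k}$, where \[N_{3k-1,k}=\big\{\{([a],[b]),([a+k],[b]),([a+2k-1],[b]),([a+2k],[b])\},\ \{([a],[b]),([a],[b+k]),([a],[b+2k-1]),([a],[b+2k])\} : 0\le a,b\le 3k-2\big\}.\]
   Context: $\mathbb{Z}^2$ carries the $l^1$ metric. $T_{n,n}=\mathbb{Z}^2/(n\mathbb{Z}\times n\mathbb{Z})$ with quotient map $\pi_n$ and quotient metric $d([x],[y])=\min\{d(x',y'):\pi_n(x')=[x],\pi_n(y')=[y]\}$ (equivalently $\{0,\dots,n-1\}^2$ with the $l^1$ product of cyclic metrics); its points are written $([a],[b])$ with $[a]$ the residue of $a$ mod $n$. $\mathrm{VR}(X;r)$ is the simplicial complex on $X$ whose simplices are the finite nonempty subsets of diameter at most $r$; a maximal simplex is one not properly contained in another. $M_{n,k}=\{\pi_n(\sigma):\sigma \text{ a maximal simplex of } \mathrm{VR}(\mathbb{Z}^2;k)\}$. *)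

(* Defs.v *)
From HB Require Import structures.
From mathcomp Require Import all_boot all_order all_algebra.
Unset Printing Implicit Defensive.
Import GRing.Theory Num.Theory.

(* It is only used for n >= 2
   (in the theorem n = 3k >= 6 or n = 3k-1 >= 8), where 'Z_n is Z/nZ and the
   values of its elements are the representatives 0..n-1. *)
Notation Tor n := ('Z_n * 'Z_n)%type.

Definition cdist (n : nat) (x y : 'Z_n) : nat :=
  let d := ((val x - val y) + (val y - val x))%N in minn d (n - d).

(* l^1 product of the cyclic metrics = the quotient metric of l^1 on Z^2 *)
Definition tdist (n : nat) (p q : Tor n) : nat :=
  (cdist n p.1 q.1 + cdist n p.2 q.2)%N.

Definition tsimplex (n r : nat) (S : {set Tor n}) : bool :=
  (S != set0) && [forall x in S, forall y in S, tdist n x y <= r].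

Definition tmaximal (n r : nat) (S : {set Tor n}) : Prop :=
  tsimplex n r S /\
  forall S' : {set Tor n}, tsimplex n r S' -> S \subset S' -> S' = S.

Definition zdist (p q : int * int) : nat :=
  (absz (p.1 - q.1)%R + absz (p.2 - q.2)%R)%N.

Definition zsimplex (r : nat) (s : seq (int * int)) : Prop :=
  s <> [::] /\ forall x y, x \in s -> y \in s -> zdist x y <= r.

Definition zmaximal (r : nat) (s : seq (int * int)) : Prop :=
  zsimplex r s /\
  forall t, zsimplex r t -> {subset s <= t} -> {subset t <= s}.

Definition pin (n : nat) (p : int * int) : Tor n :=
  ((p.1)%:~R, (p.2)%:~R)%R.

Definition Mset (n k : nat) (S : {set Tor n}) : Prop :=
  exists s, zmaximal k s /\ S = [set x in map (pin n) s].

Definition pt (n : nat) (a b : int) : Tor n := pin n (a, b).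

Definition N3k (k : nat) (S : {set Tor (3 * k)}) : Prop :=
  exists a b : nat, a < 3 * k /\ b < 3 * k /\
   (S = [set pt (3 * k) a b; pt (3 * k) (a + k)%N b; pt (3 * k) (a + 2 * k)%N b]
    \/
    S = [set pt (3 * k) a b; pt (3 * k) a (b + k)%N; pt (3 * k) a (b + 2 * k)%N]).

Definition N3k1 (k : nat) (S : {set Tor (3 * k - 1)}) : Prop :=
  exists a b : nat, a <= 3 * k - 2 /\ b <= 3 * k - 2 /\
   (S = [set pt (3 * k - 1) a b; pt (3 * k - 1) (a + k)%N b;
             pt (3 * k - 1) (a + 2 * k - 1)%N b; pt (3 * k - 1) (a + 2 * k)%N b]
    \/
    S = [set pt (3 * k - 1) a b; pt (3 * k - 1) a (b + k)%N;
             pt (3 * k - 1) a (b + 2 * k - 1)%N; pt (3 * k - 1) a (b + 2 * k)%N]).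

(* Main.v *)
Require Import Defs.
From mathcomp Require Import all_boot all_order all_algebra zify.
Import Order.TTheory GRing.Theory Num.Theory.
Set Implicit Arguments. Unset Strict Implicit.
Local Open Scope ring_scope.

Definition eqm (n : nat) (x y : int) : Prop := exists e : int, x = y + e * n%:Z.

Lemma eqm_refl n x : eqm n x x.
Proof. by exists 0; rewrite mul0r addr0. Qed.

Lemma eqm_sym n x y : eqm n x y -> eqm n y x.
Proof. by case=> e ->; exists (- e); lia. Qed.

Lemma eqm_trans n x y z : eqm n x y -> eqm n y z -> eqm n x z.
Proof. by case=> e ->; case=> f ->; exists (f + e); lia. Qed.

Lemma eqm_add n x y z w : eqm n x y -> eqm n z w -> eqm n (x + z) (y + w).
Proof. by case=> e ->; case=> f ->; exists (f + e); lia. Qed.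

Lemma eqm_opp n x y : eqm n x y -> eqm n (- x) (- y).
Proof. by case=> e ->; exists (- e); lia. Qed.

Lemma eqm_of n x y : (x = y \/ x = y + n%:Z \/ x = y - n%:Z) -> eqm n x y.
Proof.
case=> [->|[->|->]]; [exact: eqm_refl| by exists 1; lia | by exists (-1); lia].
Qed.

Lemma eqm_small n x y : eqm n x y -> x - y < 3 * n%:Z -> y - x < 3 * n%:Z ->
  x = y \/ x = y + n%:Z \/ x = y - n%:Z \/ x = y + 2 * n%:Z \/ x = y - 2 * n%:Z.
Proof.
case=> e -> h1 h2.
have [He|He] : e <= -3 \/ -2 <= e by lia.
  by exfalso; nia.
have [He2|He2] : 3 <= e \/ e <= 2 by lia.
  by exfalso; nia.
have : e = 0 \/ e = 1 \/ e = -1 \/ e = 2 \/ e = -2 by lia.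
case=> [->|[->|[->|[->|->]]]]; lia.
Qed.

Lemma Zval n (x : 'Z_n) : (1 < n)%N -> (val x < n)%N.
Proof. move=> h; apply: (leq_trans (ltn_ord x)); by rewrite (Zp_cast h). Qed.

Lemma natZ n m : ((Posz m)%:~R : 'Z_n) = m%:R.
Proof. by []. Qed.

Lemma Zn0 n : (1 < n)%N -> ((Posz n)%:~R : 'Z_n) = 0.
Proof. by move=> h; rewrite natZ pchar_Zp. Qed.

Lemma Zrep n (z : int) : (1 < n)%N -> eqm n z (val (z%:~R : 'Z_n))%:Z.
Proof.
move=> hn.
have hn0 : (Posz n != 0) by lia.
have r0 := modz_ge0 z hn0.
have rn : (z %% n)%Z < n by apply: ltz_pmod; lia.
have hr : (z %% n)%Z = (absz (z %% n)%Z)%:Z by rewrite gez0_abs.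
have e : (z%:~R : 'Z_n) = (absz (z %% n)%Z)%:R.
  rewrite {1}(divz_eq z n) intrD intrM Zn0 // mulr0 add0r hr natZ.
  by rewrite -hr.
rewrite e /= (val_Zp_nat hn) modn_small; last by lia.
exists (z %/ n)%Z.
rewrite {1}(divz_eq z n) -hr; lia.
Qed.

Lemma ZeqmE n z w : (1 < n)%N -> eqm n z w -> (z%:~R : 'Z_n) = w%:~R.
Proof. by move=> hn [e ->]; rewrite intrD intrM Zn0 // mulr0 addr0. Qed.

Lemma ZeqmP n z w : (1 < n)%N -> (z%:~R : 'Z_n) = w%:~R -> eqm n z w.
Proof.
move=> hn h; apply: eqm_trans (Zrep z hn) _; rewrite h.
exact/eqm_sym/Zrep.
Qed.

Lemma Zval_id n (x : 'Z_n) : ((val x)%:Z)%:~R = x.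
Proof. by rewrite natZ natr_Zp. Qed.

Lemma tor_eq n (x y : Tor n) : val x.1 = val y.1 -> val x.2 = val y.2 -> x = y.
Proof. by case: x y => a b [c d] /= /val_inj -> /val_inj ->. Qed.

Lemma pinE n P (x : Tor n) : (1 < n)%N ->
  eqm n P.1 (val x.1) -> eqm n P.2 (val x.2) -> pin n P = x.
Proof.
move=> hn h1 h2; case: x h1 h2 => a b /= h1 h2; rewrite /pin.
by rewrite (ZeqmE hn h1) (ZeqmE hn h2) !Zval_id.
Qed.

Lemma pinP n P Q : (1 < n)%N -> pin n P = pin n Q -> eqm n P.1 Q.1 /\ eqm n P.2 Q.2.
Proof. by move=> hn [h1 h2]; split; apply: (ZeqmP hn). Qed.

Lemma val_pin1 n P : (1 < n)%N -> eqm n P.1 (val (pin n P).1).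
Proof. by move=> hn; apply: Zrep. Qed.
Lemma val_pin2 n P : (1 < n)%N -> eqm n P.2 (val (pin n P).2).
Proof. by move=> hn; apply: Zrep. Qed.

Lemma cdistE n (x y : 'Z_n) : cdist n x y =
  minn ((val x - val y) + (val y - val x))%N (n - ((val x - val y) + (val y - val x)))%N.
Proof. by []. Qed.

Lemma cd_le_rep n (a b : nat) D : (a < n)%N -> (b < n)%N -> eqm n D (a%:Z - b%:Z) ->
  (minn ((a - b) + (b - a))%N (n - ((a - b) + (b - a)))%N <= absz D)%N.
Proof.
move=> ha hb [e ->].
have : e = 0 \/ 1 <= e \/ e <= -1 by lia.
case=> [->|[he|he]]; first by lia.
  have : (Posz n) <= e * n by nia.
  lia.
have : e * n <= - (Posz n) by nia.
lia.
Qed.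

Lemma cd_le n z w D : (1 < n)%N -> eqm n D (z - w) ->
  (cdist n (z%:~R) (w%:~R) <= absz D)%N.
Proof.
move=> hn hD; rewrite cdistE; apply: cd_le_rep; try exact: Zval.
apply: (eqm_trans hD); apply: eqm_add; first exact: Zrep.
exact/eqm_opp/Zrep.
Qed.

Lemma tdist_le n P Q : (1 < n)%N -> (tdist n (pin n P) (pin n Q) <= zdist P Q)%N.
Proof.
move=> hn; rewrite /tdist /zdist /pin /=.
apply: leq_add; apply: cd_le => //; exact: eqm_refl.
Qed.

Definition inbox (k : nat) (u0 v0 : int) (P : int * int) : bool :=
  (u0 <= P.1 + P.2 <= u0 + k%:Z) && (v0 <= P.1 - P.2 <= v0 + k%:Z).

Definition rng (M : nat) : seq int := [seq (i%:Z - M%:Z) | i <- iota 0 (2 * M).+1].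

Definition boxseq k u0 v0 : seq (int * int) :=
  let M := (absz u0 + absz v0 + k)%N in
  [seq P <- [seq (x, y) | x <- rng M, y <- rng M] | inbox k u0 v0 P].

Lemma mem_rng M x : (absz x <= M)%N -> x \in rng M.
Proof.
move=> h; apply/mapP; exists (absz (x + M%:Z)); last by lia.
rewrite mem_iota; lia.
Qed.

Lemma mem_boxseq k u0 v0 P : (P \in boxseq k u0 v0) = inbox k u0 v0 P.
Proof.
rewrite mem_filter; case h: (inbox k u0 v0 P); rewrite ?andTb ?andFb //.
apply/allpairsP; exists (P.1, P.2) => /=; split; last by case: P {h}.
  by apply: mem_rng; move: h; rewrite /inbox; lia.
by apply: mem_rng; move: h; rewrite /inbox; lia.
Qed.

Lemma half (w : int) : exists h, w = 2 * h \/ w = 2 * h + 1.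
Proof.
exists (w %/ 2)%Z.
have h0 := @modz_ge0 w 2 isT.
have h1 := @ltz_pmod w 2 isT.
have := divz_eq w 2; lia.
Qed.

Lemma box_ptu U V : exists P : int * int,
  P.1 + P.2 = U /\ (P.1 - P.2 = V \/ P.1 - P.2 = V + 1).
Proof.
have [h hh] := half (U + V + 1); exists (h, U - h) => /=; lia.
Qed.

Lemma box_ptv U V : exists P : int * int,
  P.1 - P.2 = V /\ (P.1 + P.2 = U \/ P.1 + P.2 = U + 1).
Proof.
have [h hh] := half (U + V + 1); exists (h, h - V) => /=; lia.
Qed.

Lemma box_diam k u0 v0 P Q : inbox k u0 v0 P -> inbox k u0 v0 Q -> (zdist P Q <= k)%N.
Proof. rewrite /inbox /zdist; lia. Qed.

Lemma zdist_uv P Z k : (zdist P Z <= k)%N ->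
  [/\ P.1 + P.2 - (Z.1 + Z.2) <= k%:Z, Z.1 + Z.2 - (P.1 + P.2) <= k%:Z,
      P.1 - P.2 - (Z.1 - Z.2) <= k%:Z & Z.1 - Z.2 - (P.1 - P.2) <= k%:Z].
Proof. rewrite /zdist => h; split; lia. Qed.

Lemma BM k u0 v0 Z : (1 <= k)%N ->
  (forall P, inbox k u0 v0 P -> (zdist P Z <= k)%N) -> inbox k u0 v0 Z.
Proof.
move=> hk h.
have [P1 [e1 f1]] := box_ptu (u0 + k%:Z) v0.
have [P2 [e2 f2]] := box_ptu u0 v0.
have [P3 [e3 f3]] := box_ptv u0 (v0 + k%:Z).
have [P4 [e4 f4]] := box_ptv u0 v0.
have [a1 _ _ _] : _ := zdist_uv (h P1 ltac:(rewrite /inbox; clear -e1 f1 hk; lia)).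
have [_ a2 _ _] : _ := zdist_uv (h P2 ltac:(rewrite /inbox; clear -e2 f2 hk; lia)).
have [_ _ a3 _] : _ := zdist_uv (h P3 ltac:(rewrite /inbox; clear -e3 f3 hk; lia)).
have [_ _ _ a4] : _ := zdist_uv (h P4 ltac:(rewrite /inbox; clear -e4 f4 hk; lia)).
rewrite /inbox; clear -a1 a2 a3 a4 e1 e2 e3 e4; lia.
Qed.

Lemma seq_min (T : eqType) (s : seq T) (f : T -> int) : s != [::] ->
  exists2 m, m \in s & forall x, x \in s -> f m <= f x.
Proof.
elim: s => [//|a s IH] _.
case: s IH => [|b s'] IH.
  by exists a; rewrite ?inE // => x; rewrite inE => /eqP ->.
have [m ms hm] := IH isT.
have [le|lt] := lerP (f a) (f m).
  exists a; first by rewrite inE eqxx.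
  move=> x; rewrite inE => /orP [/eqP ->//|xs].
  exact: le_trans le (hm x xs).
exists m; first by rewrite inE ms orbT.
move=> x; rewrite inE => /orP [/eqP ->|xs]; last exact: hm.
exact: ltW.
Qed.

Lemma box_zmax k u0 v0 : (1 <= k)%N -> zmaximal k (boxseq k u0 v0).
Proof.
move=> hk; split; first split.
- have [P [e f]] := box_ptu u0 v0.
  have : P \in boxseq k u0 v0 by rewrite mem_boxseq /inbox; lia.
  by move=> H E; rewrite E in H.
- by move=> x y; rewrite !mem_boxseq; apply: box_diam.
- move=> t [_ td] sub y yt; rewrite mem_boxseq; apply: BM => // P HP.
  by apply: td => //; apply: sub; rewrite mem_boxseq.
Qed.

Lemma zmax_box k s : (1 <= k)%N -> zmaximal k s -> exists u0 v0, s =i boxseq k u0 v0.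
Proof.
move=> hk [[sne sd] smax].
have sne' : s != [::] by apply/eqP.
have [m1 m1s h1] := seq_min (fun P : int * int => P.1 + P.2) sne'.
have [m2 m2s h2] := seq_min (fun P : int * int => P.1 - P.2) sne'.
exists (m1.1 + m1.2), (m2.1 - m2.2).
have sub : {subset s <= boxseq k (m1.1 + m1.2) (m2.1 - m2.2)}.
  move=> x xs; rewrite mem_boxseq /inbox.
  move: (h1 x xs) (h2 x xs) (sd x m1 xs m1s) (sd x m2 xs m2s) => /= a b c d.
  rewrite /zdist in c d; clear -a b c d; lia.
have := smax _ (proj1 (box_zmax (m1.1 + m1.2) (m2.1 - m2.2) hk)) sub.
move=> sub2 x; apply/idP/idP; [exact: sub | exact: sub2].
Qed.

Definition pbox n k u0 v0 : {set Tor n} := [set x in map (pin n) (boxseq k u0 v0)].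

Lemma Mset_box n k S : (1 <= k)%N -> Mset n k S <-> exists u0 v0, S = pbox n k u0 v0.
Proof.
move=> hk; split.
  case=> s [zm ->]; have [u0 [v0 E]] := zmax_box hk zm.
  exists u0, v0; apply/setP=> x; rewrite !inE.
  by apply/idP/idP => /mapP [P hP ->]; apply: map_f; rewrite ?E // -E.
case=> u0 [v0 ->]; exists (boxseq k u0 v0); split => //; exact: box_zmax.
Qed.

Lemma pboxP n k u0 v0 x : x \in pbox n k u0 v0 -> exists P, inbox k u0 v0 P /\ x = pin n P.
Proof. by rewrite inE => /mapP [P]; rewrite mem_boxseq => h ->; exists P. Qed.

Lemma pboxI n k u0 v0 P : inbox k u0 v0 P -> pin n P \in pbox n k u0 v0.
Proof. by move=> h; rewrite inE; apply: map_f; rewrite mem_boxseq. Qed.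

Lemma B_box n k u0 v0 : (1 < n)%N -> (1 <= k)%N -> tsimplex n k (pbox n k u0 v0).
Proof.
move=> hn hk; apply/andP; split.
  have [P [e f]] := box_ptu u0 v0.
  apply/set0Pn; exists (pin n P); apply: pboxI; rewrite /inbox; lia.
apply/forallP=> x; apply/implyP=> /pboxP [P [hP ->]].
apply/forallP=> y; apply/implyP=> /pboxP [Q [hQ ->]].
exact: leq_trans (tdist_le P Q hn) (box_diam hP hQ).
Qed.

Definition cyc (n : nat) (d : int) : nat := minn (absz d) (n - absz d).

Lemma Wn (n k x1 y1 x2 y2 A B : nat) : (2 <= k)%N -> (3*k - 1 <= n)%N -> (n <= 3*k)%N ->
  (A <= x1 + x2)%N -> (B <= y1 + y2)%N -> (y1 <= B + y2)%N -> (x1 <= A + x2)%N ->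
  (y2 <= B + y1)%N -> (x2 <= A + x1)%N -> (x1 + y1 <= k)%N -> (x2 + y2 <= k)%N ->
  (minn A (n - A) + minn B (n - B) <= k)%N -> (k < A + B)%N ->
  (y1 = 0 /\ y2 = 0 /\ n - k <= A)%N \/ (x1 = 0 /\ x2 = 0 /\ n - k <= B)%N.
Proof. lia. Qed.

Lemma W2n (n k X1 X2 D C E P1 P2 : nat) : (2 <= k)%N -> (3*k - 1 <= n)%N -> (n <= 3*k)%N ->
  (X1 <= k)%N -> (X2 <= k)%N -> (n - k <= D)%N -> (D <= P1 + P2)%N ->
  (P1 <= C + X1)%N -> (P2 <= C + X2)%N -> (C + E <= k)%N ->
  (minn P1 (n - P1) + minn E (n - E) <= k)%N -> (minn P2 (n - P2) + minn E (n - E) <= k)%N ->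
  E = 0%N.
Proof.
move=> hk hn1 hn2 hx1 hx2 hD hDP hP1 hP2 hCE h1 h2.
have hE : minn E (n - E) = E by lia.
rewrite hE in h1 h2.
have [g1|g1] : (P1 + E <= k \/ n - k + E <= P1)%N by lia.
  have [g2|g2] : (P2 + E <= k \/ n - k + E <= P2)%N by lia.
    lia.
  lia.
lia.
Qed.

Lemma tri1 (x y : int) : (absz (x - y) <= absz x + absz y)%N. Proof. lia. Qed.
Lemma tri2 (x y : int) : (absz x <= absz (x - y) + absz y)%N. Proof. lia. Qed.
Lemma tri3 (x y : int) : (absz y <= absz (x - y) + absz x)%N. Proof. lia. Qed.

Lemma W_arith n k (a1 b1 a2 b2 : int) : (2 <= k)%N -> (3*k - 1 <= n)%N -> (n <= 3*k)%N ->
  (absz a1 + absz b1 <= k)%N -> (absz a2 + absz b2 <= k)%N ->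
  (cyc n (a1 - a2) + cyc n (b1 - b2) <= k)%N -> (k < absz (a1 - a2) + absz (b1 - b2))%N ->
  (b1 = 0 /\ b2 = 0 /\ (n - k <= absz (a1 - a2))%N) \/
  (a1 = 0 /\ a2 = 0 /\ (n - k <= absz (b1 - b2))%N).
Proof.
move=> hk hn1 hn2 h1 h2 h3 h4.
have := Wn hk hn1 hn2 (tri1 a1 a2) (tri1 b1 b2) (tri2 b1 b2) (tri2 a1 a2)
  (tri3 b1 b2) (tri3 a1 a2) h1 h2 h3 h4.
case=> [[e1 [e2 e3]]|[e1 [e2 e3]]]; [left|right]; (split; [|split]) => //;
  by apply/eqP; rewrite -absz_eq0; apply/eqP.
Qed.

Lemma W2_arith n k (a1 a2 c d : int) : (2 <= k)%N -> (3*k - 1 <= n)%N -> (n <= 3*k)%N ->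
  (absz a1 <= k)%N -> (absz a2 <= k)%N -> (n - k <= absz (a1 - a2))%N ->
  (absz c + absz d <= k)%N ->
  (cyc n (c - a1) + cyc n d <= k)%N -> (cyc n (c - a2) + cyc n d <= k)%N -> d = 0.
Proof.
move=> hk hn1 hn2 h1 h2 h3 h4 h5 h6.
have t1 : (absz (a1 - a2) <= absz (c - a1) + absz (c - a2))%N by clear; lia.
have t2 : (absz (c - a1) <= absz c + absz a1)%N by clear; lia.
have t3 : (absz (c - a2) <= absz c + absz a2)%N by clear; lia.
have := W2n hk hn1 hn2 h1 h2 h3 t1 t2 t3 h4 h5 h6.
by move/eqP; rewrite absz_eq0 => /eqP.
Qed.

Lemma tsimplexP n r (S : {set Tor n}) : tsimplex n r S ->
  S != set0 /\ forall x y, x \in S -> y \in S -> (tdist n x y <= r)%N.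
Proof.
case/andP => ne /forall_inP h; split => // x y xS yS.
by move: (h x xS) => /forall_inP /(_ y yS).
Qed.

Lemma tsimplexI n r (S : {set Tor n}) : S != set0 ->
  (forall x y, x \in S -> y \in S -> (tdist n x y <= r)%N) -> tsimplex n r S.
Proof.
move=> ne h; apply/andP; split => //.
by apply/forall_inP => x xS; apply/forall_inP => y yS; apply: h.
Qed.

Lemma frame n r (P : {set Tor n} -> Prop) :
  (forall S, tsimplex n r S -> exists X, P X /\ S \subset X) ->
  (forall X, P X -> tsimplex n r X) ->
  (forall X S', P X -> tsimplex n r S' -> X \subset S' -> S' \subset X) ->
  forall S, tmaximal n r S <-> P S.
Proof.
move=> hA hB hM S; split.
  case=> hS hmax; have [X [PX sub]] := hA S hS.
  by rewrite -(hmax X (hB X PX) sub).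
move=> PS; split; first exact: hB.
by move=> S' hS' sub; apply/eqP; rewrite eqEsubset (hM S S') // sub.
Qed.

Definition off (n a b : nat) : int :=
  if ((b - a) + (a - b) <= n - ((b - a) + (a - b)))%N then b%:Z - a%:Z
  else if (a <= b)%N then b%:Z - a%:Z - n%:Z else b%:Z - a%:Z + n%:Z.

Lemma offP n a b : (a < n)%N -> (b < n)%N ->
  [/\ b%:Z = a%:Z + off n a b \/ b%:Z = a%:Z + off n a b - n%:Z \/
      b%:Z = a%:Z + off n a b + n%:Z,
      absz (off n a b) = minn ((a - b) + (b - a)) (n - ((a - b) + (b - a)))%N
    & (2 * absz (off n a b) <= n)%N].
Proof.
move=> ha hb; rewrite /off; case: ifP => h1; [|case: ifP => h2]; split; lia.
Qed.

Lemma off_eqm n a b : (a < n)%N -> (b < n)%N -> eqm n b (a%:Z + off n a b).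
Proof.
move=> ha hb; have [h _ _] := offP ha hb; apply: eqm_of; lia.
Qed.

Lemma off_rel n k a b c : (a < n)%N -> (b < n)%N -> (c < n)%N -> (2 * k < n)%N ->
  (absz (off n a b) <= k)%N -> (absz (off n a c) <= k)%N ->
  minn ((b - c) + (c - b)) (n - ((b - c) + (c - b)))%N = cyc n (off n a b - off n a c).
Proof.
move=> ha hb hc hk h1 h2; rewrite /cyc.
have [e1 _ _] := offP ha hb; have [e2 _ _] := offP ha hc.
move: (off n a b) (off n a c) e1 e2 h1 h2 => o1 o2 e1 e2 h1 h2.
case: e1 => [e1|[e1|e1]]; case: e2 => [e2|[e2|e2]]; lia.
Qed.

Definition wrap1 n k (S : {set Tor n}) (al : Tor n -> int) :=
  [/\ forall s, s \in S -> (absz (al s) <= k)%N,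
      forall s t, s \in S -> t \in S -> (cyc n (al s - al t) <= k)%N
    & exists q r, [/\ q \in S, r \in S & (n - k <= absz (al q - al r))%N] ].
Arguments wrap1 : clear implicits.

Lemma cdist_off n (x y : 'Z_n) : (1 < n)%N ->
  cdist n x y = absz (off n (val x) (val y)).
Proof.
move=> hn; have [_ e _] := offP (Zval x hn) (Zval y hn); by rewrite e cdistE.
Qed.

Lemma cdist_rel n k (p s t : 'Z_n) : (1 < n)%N -> (2 * k < n)%N ->
  (cdist n p s <= k)%N -> (cdist n p t <= k)%N ->
  cdist n s t = cyc n (off n (val p) (val s) - off n (val p) (val t)).
Proof.
move=> hn hk h1 h2; rewrite !(cdist_off _ _ hn) in h1 h2.
by rewrite cdistE (off_rel (Zval p hn) (Zval s hn) (Zval t hn) hk h1 h2).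
Qed.

Lemma eqm_val_eq n (a b : nat) : (a < n)%N -> (b < n)%N -> eqm n a b -> a = b.
Proof.
move=> ha hb h; have := eqm_small h; move=> /(_ ltac:(lia) ltac:(lia)); lia.
Qed.

Lemma A0 n k (S : {set Tor n}) : (1 < n)%N -> (2 <= k)%N -> (3*k - 1 <= n)%N ->
  (n <= 3*k)%N -> tsimplex n k S ->
  (exists u0 v0, S \subset pbox n k u0 v0) \/
  (exists (p : Tor n) (al : Tor n -> int), wrap1 n k S al /\
     forall s, s \in S -> s.2 = p.2 /\ eqm n (val s.1) ((val p.1)%:Z + al s)) \/
  (exists (p : Tor n) (al : Tor n -> int), wrap1 n k S al /\
     forall s, s \in S -> s.1 = p.1 /\ eqm n (val s.2) ((val p.2)%:Z + al s)).
Proof.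
move=> hn hk hn1 hn2 /tsimplexP [ne td].
have h2k : (2 * k < n)%N by lia.
have [p pS] := set0Pn _ ne.
pose al := fun s : Tor n => off n (val p.1) (val s.1).
pose be := fun s : Tor n => off n (val p.2) (val s.2).
have H1 : forall s, s \in S -> (absz (al s) + absz (be s) <= k)%N.
  move=> s sS; have := td p s pS sS; rewrite /tdist.
  by rewrite !(cdist_off _ _ hn).
have H2 : forall s t, s \in S -> t \in S ->
    (cyc n (al s - al t) + cyc n (be s - be t) <= k)%N.
  move=> s t sS tS; have g1 := H1 s sS; have g2 := H1 t tS.
  have := td s t sS tS; rewrite /tdist /al /be in g1 g2 *.
  rewrite (@cdist_rel n k p.1 s.1 t.1) // ?(@cdist_rel n k p.2 s.2 t.2) //
    (cdist_off _ _ hn).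
  - exact: leq_trans (leq_addl _ _) g1.
  - exact: leq_trans (leq_addl _ _) g2.
  - exact: leq_trans (leq_addr _ _) g1.
  - exact: leq_trans (leq_addr _ _) g2.
have E1 : forall s : Tor n, eqm n (val s.1) ((val p.1)%:Z + al s).
  by move=> s; apply: off_eqm; apply: Zval.
have E2 : forall s : Tor n, eqm n (val s.2) ((val p.2)%:Z + be s).
  by move=> s; apply: off_eqm; apply: Zval.
have Lpin : forall s : Tor n, pin n ((val p.1)%:Z + al s, (val p.2)%:Z + be s) = s.
  move=> s; apply: pinE => //=; apply: eqm_sym; [exact: E1 | exact: E2].
case: (boolP [forall s in S, forall t in S,
               (absz (al s - al t) + absz (be s - be t) <= k)%N]) => [hall|hnot].
  left.
  have ne' : enum S != [::].
    by apply/eqP => e; move: pS; rewrite -mem_enum e.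
  have [m1 m1S hm1] := seq_min (fun s => al s + be s) ne'.
  have [m2 m2S hm2] := seq_min (fun s => al s - be s) ne'.
  rewrite mem_enum in m1S; rewrite mem_enum in m2S.
  exists ((val p.1)%:Z + (val p.2)%:Z + (al m1 + be m1)).
  exists ((val p.1)%:Z - (val p.2)%:Z + (al m2 - be m2)).
  apply/subsetP => s sS; rewrite -(Lpin s); apply: pboxI; rewrite /inbox /=.
  move: (hm1 s) (hm2 s); rewrite mem_enum => /(_ sS) /= g1 /(_ sS) /= g2.
  move/forall_inP: hall => hall.
  move: (hall s sS) => /forall_inP hs.
  move: (hs m1 m1S) (hs m2 m2S) => g3 g4.
  clear -g1 g2 g3 g4; lia.
right.
move/forall_inPn: hnot => [q qS /forall_inPn [r rS]]; rewrite -ltnNge => hqr.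
have := W_arith hk hn1 hn2 (H1 q qS) (H1 r rS) (H2 q r qS rS) hqr.
case=> [[bq [br hw]]|[aq [ar hw]]].
  left; exists p, al; split.
    split.
    - by move=> s sS; have := H1 s sS; lia.
    - by move=> s t sS tS; have := H2 s t sS tS; lia.
    - by exists q, r.
  move=> s sS.
  have bs : be s = 0.
    apply: (W2_arith hk hn1 hn2 _ _ hw (H1 s sS)).
    - by have := H1 q qS; lia.
    - by have := H1 r rS; lia.
    - by have := H2 s q sS qS; rewrite bq subr0.
    - by have := H2 s r sS rS; rewrite br subr0.
  split; last exact: E1.
  apply: val_inj; apply: eqm_val_eq; try exact: Zval.
  by have := E2 s; rewrite bs addr0.
right; exists p, be; split.
  split.
  - by move=> s sS; have := H1 s sS; lia.
  - by move=> s t sS tS; have := H2 s t sS tS; lia.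
  - by exists q, r.
move=> s sS.
have as0 : al s = 0.
  apply: (@W2_arith n k (be q) (be r) (be s) (al s) hk hn1 hn2 _ _ hw).
  - by have := H1 q qS; lia.
  - by have := H1 r rS; lia.
  - by have := H1 s sS; lia.
  - by have := H2 s q sS qS; rewrite aq subr0; lia.
  - by have := H2 s r sS rS; rewrite ar subr0; lia.
split; last exact: E2.
apply: val_inj; apply: eqm_val_eq; try exact: Zval.
by have := E1 s; rewrite as0 addr0.
Qed.

Lemma minmax_S n k (S : {set Tor n}) (al : Tor n -> int) : wrap1 n k S al ->
  exists m M, [/\ m \in S, M \in S, (n - k <= absz (al M - al m))%N,
     forall s, s \in S -> al m <= al s & forall s, s \in S -> al s <= al M].
Proof.
case=> hb hc [q [r [qS rS hqr]]].
have ne' : enum S != [::] by apply/eqP => e; move: qS; rewrite -mem_enum e.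
have [m mS hm] := seq_min al ne'.
have [M MS hM] := seq_min (fun s => - al s) ne'.
rewrite mem_enum in mS; rewrite mem_enum in MS.
exists m, M; split => //.
- have g1 := hm q; have g2 := hm r; have g3 := hM q; have g4 := hM r.
  rewrite !mem_enum in g1 g2 g3 g4.
  move: (g1 qS) (g2 rS) (g3 qS) (g4 rS) hqr => /= h1 h2 h3 h4 h5.
  clear -h1 h2 h3 h4 h5; lia.
- by move=> s sS; apply: hm; rewrite mem_enum.
- move=> s sS; have := hM s; rewrite mem_enum => /(_ sS) /=.
  by rewrite lerN2.
Qed.

Lemma W3set n k (S : {set Tor n}) (al : Tor n -> int) : n = (3 * k)%N -> (1 <= k)%N ->
  wrap1 n k S al -> exists c0 : int, forall s, s \in S ->
   eqm n (al s) (c0 + (0%N)%:Z) \/ eqm n (al s) (c0 + k%:Z) \/ eqm n (al s) (c0 + (2 * k)%N%:Z).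
Proof.
move=> hn hk hw; have [m [M [mS MS hmM hm hM]]] := minmax_S hw.
case: hw => hb hc _.
exists (- k%:Z) => s sS.
have h1 := hb m mS; have h2 := hb M MS; have h3 := hm s sS; have h4 := hM s sS.
have h5 := hc s m sS mS; have h6 := hc M s MS sS.
move: (al s) (al m) (al M) h1 h2 h3 h4 h5 h6 hmM => x m0 M0 h1 h2 h3 h4 h5 h6 h7.
rewrite /cyc in h5 h6.
have : x = - k%:Z \/ x = 0 \/ x = k%:Z by clear -h1 h2 h3 h4 h5 h6 h7 hn hk; lia.
case=> [->|[->|->]].
- by left; apply: eqm_of; lia.
- by right; left; apply: eqm_of; lia.
- by right; right; apply: eqm_of; lia.
Qed.

Ltac eqm4 := solve [ left; apply: eqm_of; lia | right; left; apply: eqm_of; lia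
  | right; right; left; apply: eqm_of; lia | right; right; right; apply: eqm_of; lia ].

Lemma W4set n k (S : {set Tor n}) (al : Tor n -> int) : n = (3 * k - 1)%N -> (3 <= k)%N ->
  wrap1 n k S al -> exists c0 : int, forall s, s \in S ->
   eqm n (al s) (c0 + (0%N)%:Z) \/ eqm n (al s) (c0 + k%:Z) \/
   eqm n (al s) (c0 + (2 * k - 1)%N%:Z) \/ eqm n (al s) (c0 + (2 * k)%N%:Z).
Proof.
move=> hn hk hw; have [m [M [mS MS hmM hm hM]]] := minmax_S hw.
case: hw => hb hc _.
have h1 := hb m mS; have h2 := hb M MS.
have hmM' := hm M MS.
have : (al m = - k%:Z + 1 /\ al M = k%:Z) \/ (al m = - k%:Z /\ al M = k%:Z - 1) \/
       (al m = - k%:Z /\ al M = k%:Z).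
  by clear -h1 h2 hmM hmM' hn hk; lia.
case=> [[e1 e2]|[[e1 e2]|[e1 e2]]].
- exists (k%:Z) => s sS.
  have h3 := hm s sS; have h4 := hM s sS.
  have h5 := hc s m sS mS; have h6 := hc M s MS sS.
  rewrite e1 e2 /cyc in h3 h4 h5 h6.
  move: (al s) h3 h4 h5 h6 => x h3 h4 h5 h6.
  have : x = - k%:Z + 1 \/ x = 0 \/ x = 1 \/ x = k%:Z by clear -h3 h4 h5 h6 hn hk; lia.
  case=> [->|[->|[->|->]]]; clear -hn hk; eqm4.
- exists (k%:Z - 1) => s sS.
  have h3 := hm s sS; have h4 := hM s sS.
  have h5 := hc s m sS mS; have h6 := hc M s MS sS.
  rewrite e1 e2 /cyc in h3 h4 h5 h6.
  move: (al s) h3 h4 h5 h6 => x h3 h4 h5 h6.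
  have : x = - k%:Z \/ x = -1 \/ x = 0 \/ x = k%:Z - 1 by clear -h3 h4 h5 h6 hn hk; lia.
  case=> [->|[->|[->|->]]]; clear -hn hk; eqm4.
- case: (boolP [exists t in S, al t == - k%:Z + 1]) => [/exists_inP [t tS /eqP et]|hno].
    exists 0 => s sS.
    have h3 := hm s sS; have h4 := hM s sS.
    have h5 := hc s m sS mS; have h6 := hc M s MS sS; have h7 := hc s t sS tS.
    rewrite e1 e2 et /cyc in h3 h4 h5 h6 h7.
    move: (al s) h3 h4 h5 h6 h7 => x h3 h4 h5 h6 h7.
    have : x = - k%:Z \/ x = - k%:Z + 1 \/ x = 0 \/ x = k%:Z
      by clear -h3 h4 h5 h6 h7 hn hk; lia.
    case=> [->|[->|[->|->]]]; clear -hn hk; eqm4.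
  exists (- k%:Z) => s sS.
  have h3 := hm s sS; have h4 := hM s sS.
  have h5 := hc s m sS mS; have h6 := hc M s MS sS.
  have h7 : al s != - k%:Z + 1.
    by apply/negP => e; move/exists_inP: hno; apply; exists s.
  rewrite e1 e2 /cyc in h3 h4 h5 h6.
  move: (al s) h3 h4 h5 h6 h7 => x h3 h4 h5 h6 /eqP h7.
  have : x = - k%:Z \/ x = 0 \/ x = k%:Z - 1 \/ x = k%:Z
    by clear -h3 h4 h5 h6 h7 hn hk; lia.
  case=> [->|[->|[->|->]]]; clear -hn hk; eqm4.
Qed.

Lemma row_pt n (s p : Tor n) (x c0 : int) (j m : nat) : (1 < n)%N -> s.2 = p.2 ->
  eqm n (val s.1) ((val p.1)%:Z + x) -> eqm n x (c0 + j%:Z) ->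
  m = (val (((val p.1)%:Z + c0)%:~R : 'Z_n) + j)%N -> s = pt n m (val p.2).
Proof.
move=> hn e2 e1 ex hm; apply/esym; apply: pinE => //.
  change (eqm n (Posz m) (val s.1)); rewrite hm PoszD.
  apply: eqm_trans (eqm_add (eqm_sym (Zrep _ hn)) (@eqm_refl n (Posz j))) _.
  apply: eqm_sym; apply: eqm_trans e1 _; rewrite -addrA.
  exact: eqm_add (@eqm_refl n _) ex.
change (eqm n (Posz (val p.2)) (val s.2)); rewrite e2; exact: eqm_refl.
Qed.

Lemma col_pt n (s p : Tor n) (x c0 : int) (j m : nat) : (1 < n)%N -> s.1 = p.1 ->
  eqm n (val s.2) ((val p.2)%:Z + x) -> eqm n x (c0 + j%:Z) ->
  m = (val (((val p.2)%:Z + c0)%:~R : 'Z_n) + j)%N -> s = pt n (val p.1) m.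
Proof.
move=> hn e2 e1 ex hm; apply/esym; apply: pinE => //.
  change (eqm n (Posz (val p.1)) (val s.1)); rewrite e2; exact: eqm_refl.
change (eqm n (Posz m) (val s.2)); rewrite hm PoszD.
apply: eqm_trans (eqm_add (eqm_sym (Zrep _ hn)) (@eqm_refl n (Posz j))) _.
apply: eqm_sym; apply: eqm_trans e1 _; rewrite -addrA.
exact: eqm_add (@eqm_refl n _) ex.
Qed.

Lemma mem3 (T : finType) (x x1 x2 x3 : T) : x = x1 \/ x = x2 \/ x = x3 ->
  x \in [set x1; x2; x3].
Proof. by case=> [->|[->|->]]; rewrite !inE eqxx ?orbT. Qed.

Lemma mem4 (T : finType) (x x1 x2 x3 x4 : T) : x = x1 \/ x = x2 \/ x = x3 \/ x = x4 ->
  x \in [set x1; x2; x3; x4].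
Proof. by case=> [->|[->|[->|->]]]; rewrite !inE eqxx ?orbT. Qed.

Definition N3 n k (S : {set Tor n}) : Prop :=
  exists a b : nat, (a < n)%N /\ (b < n)%N /\
   (S = [set pt n a b; pt n (a + k)%N b; pt n (a + 2 * k)%N b]
    \/
    S = [set pt n a b; pt n a (b + k)%N; pt n a (b + 2 * k)%N]).

Definition N4 n k (S : {set Tor n}) : Prop :=
  exists a b : nat, (a < n)%N /\ (b < n)%N /\
   (S = [set pt n a b; pt n (a + k)%N b;
             pt n (a + 2 * k - 1)%N b; pt n (a + 2 * k)%N b]
    \/
    S = [set pt n a b; pt n a (b + k)%N;
             pt n a (b + 2 * k - 1)%N; pt n a (b + 2 * k)%N]).

Arguments N3 : clear implicits.
Arguments N4 : clear implicits.

Definition PF3 n k (X : {set Tor n}) := (exists u0 v0, X = pbox n k u0 v0) \/ N3 n k X.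
Definition PF4 n k (X : {set Tor n}) := (exists u0 v0, X = pbox n k u0 v0) \/ N4 n k X.
Arguments PF3 : clear implicits.
Arguments PF4 : clear implicits.

Lemma A3 n k (S : {set Tor n}) : n = (3 * k)%N -> (2 <= k)%N -> tsimplex n k S ->
  exists X, PF3 n k X /\ S \subset X.
Proof.
move=> hn hk hS.
have hn1 : (1 < n)%N by lia.
have hk1 : (1 <= k)%N by lia.
case: (A0 hn1 hk ltac:(lia) ltac:(lia) hS) => [[u0 [v0 sub]]|[[p [al [hw hs]]]|[p [al [hw hs]]]]].
- by exists (pbox n k u0 v0); split => //; left; exists u0, v0.
- have [c0 hc] := W3set hn hk1 hw.
  set a := val (((val p.1)%:Z + c0)%:~R : 'Z_n).
  exists [set pt n a (val p.2); pt n (a + k)%N (val p.2); pt n (a + 2 * k)%N (val p.2)].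
  split.
    right; exists a, (val p.2); split; first exact: Zval.
    by split; [exact: Zval | left].
  apply/subsetP => s sS; apply: mem3; have [e2 e1] := hs s sS.
  case: (hc s sS) => [h|[h|h]].
  + by left; apply: (row_pt hn1 e2 e1 h); rewrite addn0.
  + by right; left; apply: (row_pt hn1 e2 e1 h).
  + by right; right; apply: (row_pt hn1 e2 e1 h).
- have [c0 hc] := W3set hn hk1 hw.
  set b := val (((val p.2)%:Z + c0)%:~R : 'Z_n).
  exists [set pt n (val p.1) b; pt n (val p.1) (b + k)%N; pt n (val p.1) (b + 2 * k)%N].
  split.
    right; exists (val p.1), b; split; first exact: Zval.
    by split; [exact: Zval | right].
  apply/subsetP => s sS; apply: mem3; have [e2 e1] := hs s sS.
  case: (hc s sS) => [h|[h|h]].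
  + by left; apply: (col_pt hn1 e2 e1 h); rewrite addn0.
  + by right; left; apply: (col_pt hn1 e2 e1 h).
  + by right; right; apply: (col_pt hn1 e2 e1 h).
Qed.

Lemma A4 n k (S : {set Tor n}) : n = (3 * k - 1)%N -> (3 <= k)%N -> tsimplex n k S ->
  exists X, PF4 n k X /\ S \subset X.
Proof.
move=> hn hk hS.
have hn1 : (1 < n)%N by lia.
have hk2 : (2 <= k)%N by lia.
case: (A0 hn1 hk2 ltac:(lia) ltac:(lia) hS) => [[u0 [v0 sub]]|[[p [al [hw hs]]]|[p [al [hw hs]]]]].
- by exists (pbox n k u0 v0); split => //; left; exists u0, v0.
- have [c0 hc] := W4set hn hk hw.
  set a := val (((val p.1)%:Z + c0)%:~R : 'Z_n).
  exists [set pt n a (val p.2); pt n (a + k)%N (val p.2);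
          pt n (a + 2 * k - 1)%N (val p.2); pt n (a + 2 * k)%N (val p.2)].
  split.
    right; exists a, (val p.2); split; first exact: Zval.
    by split; [exact: Zval | left].
  apply/subsetP => s sS; apply: mem4; have [e2 e1] := hs s sS.
  case: (hc s sS) => [h|[h|[h|h]]].
  + by left; apply: (row_pt hn1 e2 e1 h); rewrite addn0.
  + by right; left; apply: (row_pt hn1 e2 e1 h).
  + by right; right; left; apply: (row_pt hn1 e2 e1 h); lia.
  + by right; right; right; apply: (row_pt hn1 e2 e1 h).
- have [c0 hc] := W4set hn hk hw.
  set b := val (((val p.2)%:Z + c0)%:~R : 'Z_n).
  exists [set pt n (val p.1) b; pt n (val p.1) (b + k)%N;
          pt n (val p.1) (b + 2 * k - 1)%N; pt n (val p.1) (b + 2 * k)%N].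
  split.
    right; exists (val p.1), b; split; first exact: Zval.
    by split; [exact: Zval | right].
  apply/subsetP => s sS; apply: mem4; have [e2 e1] := hs s sS.
  case: (hc s sS) => [h|[h|[h|h]]].
  + by left; apply: (col_pt hn1 e2 e1 h); rewrite addn0.
  + by right; left; apply: (col_pt hn1 e2 e1 h).
  + by right; right; left; apply: (col_pt hn1 e2 e1 h); lia.
  + by right; right; right; apply: (col_pt hn1 e2 e1 h).
Qed.

Lemma eqm_fix n x x' y y' : eqm n x x' -> eqm n y y' ->
  (x - x') - (y - y') < n%:Z -> (y - y') - (x - x') < n%:Z -> x - x' = y - y'.
Proof.
case=> e ->; case=> f -> h1 h2.
have : e = f by nia.
move=> ->; lia.
Qed.

Lemma eqm_shift n a b c : eqm n a b -> eqm n (c + (a - b)) c.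
Proof. by case=> e ->; exists e; lia. Qed.

Lemma zdist_coord P Q k : (zdist P Q <= k)%N ->
  [/\ P.1 - Q.1 <= k%:Z, Q.1 - P.1 <= k%:Z, P.2 - Q.2 <= k%:Z & Q.2 - P.2 <= k%:Z].
Proof. rewrite /zdist => h; split; lia. Qed.

Lemma C_bb n k uA vA uB vB : (1 < n)%N -> (1 <= k)%N -> (2 * k < n)%N ->
  pbox n k uA vA \subset pbox n k uB vB -> pbox n k uB vB \subset pbox n k uA vA.
Proof.
move=> hn hk h2k sub.
have [P0 [e0 f0]] := box_ptu uA vA.
have hP0 : inbox k uA vA P0 by rewrite /inbox; clear -e0 f0 hk; lia.
have /pboxP [Q0 [hQ0 eq0]] := subsetP sub _ (@pboxI n _ _ _ _ hP0).
have [c1 c2] := pinP hn eq0.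
apply/subsetP => y /pboxP [Q [hQ ->]].
have -> : pin n Q = pin n (Q.1 + (P0.1 - Q0.1), Q.2 + (P0.2 - Q0.2)).
  apply/esym/pinE => //.
    change (eqm n (Q.1 + (P0.1 - Q0.1)) (val (pin n Q).1)).
    apply: eqm_trans (eqm_shift _ c1) _; exact: Zrep.
  change (eqm n (Q.2 + (P0.2 - Q0.2)) (val (pin n Q).2)).
  apply: eqm_trans (eqm_shift _ c2) _; exact: Zrep.
apply: pboxI; apply: BM => // P hP.
have /pboxP [Q' [hQ' eq']] := subsetP sub _ (@pboxI n _ _ _ _ hP).
have [d1 d2] := pinP hn eq'.
have [b1 b2 b3 b4] := zdist_coord (box_diam hP hP0).
have [b5 b6 b7 b8] := zdist_coord (box_diam hQ' hQ0).
have g1 := eqm_fix d1 c1 ltac:(lia) ltac:(lia).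
have g2 := eqm_fix d2 c2 ltac:(lia) ltac:(lia).
have := box_diam hQ' hQ; rewrite /zdist /=.
clear -g1 g2; lia.
Qed.

Lemma C_bN_row n k u0 v0 (X : {set Tor n}) c : (1 < n)%N -> (2 <= k)%N ->
  pbox n k u0 v0 \subset X -> (forall x, x \in X -> x.2 = c) -> False.
Proof.
move=> hn hk sub hX.
have [P [e f]] := box_ptu u0 (v0 + 1).
have hP : inbox k u0 v0 P by rewrite /inbox; clear -e f hk; lia.
have hP' : inbox k u0 v0 (P.1, P.2 + 1) by rewrite /inbox /=; clear -e f hk; lia.
have h1 := hX _ (subsetP sub _ (@pboxI n _ _ _ _ hP)).
have h2 := hX _ (subsetP sub _ (@pboxI n _ _ _ _ hP')).
have : (pin n P).2 = (pin n (P.1, P.2 + 1)).2 by rewrite h1 h2.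
move=> /(ZeqmP hn) /= /eqm_small; clear -hn; lia.
Qed.

Lemma C_bN_col n k u0 v0 (X : {set Tor n}) c : (1 < n)%N -> (2 <= k)%N ->
  pbox n k u0 v0 \subset X -> (forall x, x \in X -> x.1 = c) -> False.
Proof.
move=> hn hk sub hX.
have [P [e f]] := box_ptu u0 v0.
have hP : inbox k u0 v0 P by rewrite /inbox; clear -e f hk; lia.
have hP' : inbox k u0 v0 (P.1 + 1, P.2) by rewrite /inbox /=; clear -e f hk; lia.
have h1 := hX _ (subsetP sub _ (@pboxI n _ _ _ _ hP)).
have h2 := hX _ (subsetP sub _ (@pboxI n _ _ _ _ hP')).
have : (pin n P).1 = (pin n (P.1 + 1, P.2)).1 by rewrite h1 h2.
move=> /(ZeqmP hn) /= /eqm_small; clear -hn; lia.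
Qed.

Lemma row3_snd n (z1 z2 z3 b : int) x :
  x \in [set pt n z1 b; pt n z2 b; pt n z3 b] -> x.2 = b%:~R.
Proof. by rewrite !inE => /orP [/orP [/eqP ->|/eqP ->]|/eqP ->]. Qed.
Lemma col3_fst n (z1 z2 z3 b : int) x :
  x \in [set pt n b z1; pt n b z2; pt n b z3] -> x.1 = b%:~R.
Proof. by rewrite !inE => /orP [/orP [/eqP ->|/eqP ->]|/eqP ->]. Qed.
Lemma row4_snd n (z1 z2 z3 z4 b : int) x :
  x \in [set pt n z1 b; pt n z2 b; pt n z3 b; pt n z4 b] -> x.2 = b%:~R.
Proof. by rewrite !inE => /orP [/orP [/orP [/eqP ->|/eqP ->]|/eqP ->]|/eqP ->]. Qed.
Lemma col4_fst n (z1 z2 z3 z4 b : int) x :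
  x \in [set pt n b z1; pt n b z2; pt n b z3; pt n b z4] -> x.1 = b%:~R.
Proof. by rewrite !inE => /orP [/orP [/orP [/eqP ->|/eqP ->]|/eqP ->]|/eqP ->]. Qed.

Lemma cdist_same n (x : 'Z_n) : cdist n x x = 0%N.
Proof. rewrite cdistE subnn; lia. Qed.

Lemma cd_pick n k (z w : int) : (1 < n)%N ->
  (absz (z - w)%R <= k \/ absz (z - w + n%:Z)%R <= k \/ absz (z - w - n%:Z)%R <= k)%N ->
  (cdist n (z%:~R) (w%:~R) <= k)%N.
Proof.
move=> hn [h|[h|h]].
- exact: leq_trans (cd_le hn (@eqm_refl n (z - w))) h.
- by apply: leq_trans (cd_le hn _) h; apply: eqm_of; lia.
- by apply: leq_trans (cd_le hn _) h; apply: eqm_of; lia.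
Qed.

Lemma tdist_row n k (z w b : int) : (1 < n)%N ->
  (absz (z - w)%R <= k \/ absz (z - w + n%:Z)%R <= k \/ absz (z - w - n%:Z)%R <= k)%N ->
  (tdist n (pt n z b) (pt n w b) <= k)%N.
Proof.
move=> hn h; rewrite /tdist.
change (cdist n (z%:~R) (w%:~R) + cdist n (b%:~R) (b%:~R) <= k)%N.
by rewrite cdist_same addn0; apply: cd_pick.
Qed.

Lemma tdist_col n k (z w b : int) : (1 < n)%N ->
  (absz (z - w)%R <= k \/ absz (z - w + n%:Z)%R <= k \/ absz (z - w - n%:Z)%R <= k)%N ->
  (tdist n (pt n b z) (pt n b w) <= k)%N.
Proof.
move=> hn h; rewrite /tdist.
change (cdist n (b%:~R) (b%:~R) + cdist n (z%:~R) (w%:~R) <= k)%N.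
by rewrite cdist_same add0n; apply: cd_pick.
Qed.

Definition tof (n a x : nat) : int :=
  if (a <= x)%N then x%:Z - a%:Z else x%:Z - a%:Z + n%:Z.

Lemma cd_t n (x : 'Z_n) (m a j : nat) (w : int) : (1 < n)%N -> (a < n)%N -> (j <= n)%N ->
  m = (a + j)%N -> cdist n x (pt n m w).1 = cyc n (tof n a (val x) - j%:Z).
Proof.
move=> hn ha hj hm.
change (cdist n x ((Posz m)%:~R) = cyc n (tof n a (val x) - j%:Z)).
rewrite cdistE /cyc /tof.
have hv := Zval ((Posz m)%:~R : 'Z_n) hn.
have := eqm_small (Zrep (Posz m) hn) => /(_ ltac:(lia) ltac:(lia)) ev.
have hx := Zval x hn.
move: (val ((Posz m)%:~R : 'Z_n)) hv ev => v hv ev.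
move: (val x) hx => y hy.
case: leqP => h; clear -hm hv ev hy h ha hj; lia.
Qed.

Lemma cd_snd n (y : 'Z_n) (z : int) (b : nat) : (1 < n)%N -> (b < n)%N ->
  cdist n y (pt n z b).2 = minn ((val y - b) + (b - val y))%N (n - ((val y - b) + (b - val y)))%N.
Proof.
move=> hn hb.
change (cdist n y ((Posz b)%:~R) = minn ((val y - b) + (b - val y))%N (n - ((val y - b) + (b - val y)))%N).
rewrite cdistE.
have e : val ((Posz b)%:~R : 'Z_n) = b.
  apply: eqm_val_eq; [exact: Zval | exact: hb | exact/eqm_sym/Zrep].
by rewrite e.
Qed.

Lemma tof_b n a x : (a < n)%N -> (x < n)%N -> 0 <= tof n a x /\ tof n a x < n%:Z.
Proof. by move=> ha hx; rewrite /tof; case: leqP => h; split; lia. Qed.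

Lemma pt_of n (s : Tor n) (m b : nat) : (1 < n)%N ->
  (m%:Z = (val s.1)%:Z \/ m%:Z = (val s.1)%:Z + n%:Z \/ m%:Z = (val s.1)%:Z - n%:Z) ->
  (b%:Z = (val s.2)%:Z \/ b%:Z = (val s.2)%:Z + n%:Z \/ b%:Z = (val s.2)%:Z - n%:Z) ->
  s = pt n m b.
Proof.
move=> hn h1 h2; apply/esym; apply: pinE => //.
  by change (eqm n (Posz m) (val s.1)); apply: eqm_of.
by change (eqm n (Posz b) (val s.2)); apply: eqm_of.
Qed.

Lemma B_N3 n k X : n = (3 * k)%N -> (1 <= k)%N -> N3 n k X -> tsimplex n k X.
Proof.
move=> hn hk [a [b [ha [hb [->|->]]]]]; apply: tsimplexI.
- by apply/set0Pn; exists (pt n a b); rewrite !inE eqxx.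
- move=> x y; rewrite !inE => /orP [/orP [/eqP->|/eqP->]|/eqP->]
    /orP [/orP [/eqP->|/eqP->]|/eqP->]; apply: tdist_row; lia.
- by apply/set0Pn; exists (pt n a b); rewrite !inE eqxx.
- move=> x y; rewrite !inE => /orP [/orP [/eqP->|/eqP->]|/eqP->]
    /orP [/orP [/eqP->|/eqP->]|/eqP->]; apply: tdist_col; lia.
Qed.

Lemma B_N4 n k X : n = (3 * k - 1)%N -> (3 <= k)%N -> N4 n k X -> tsimplex n k X.
Proof.
move=> hn hk [a [b [ha [hb [->|->]]]]]; apply: tsimplexI.
- by apply/set0Pn; exists (pt n a b); rewrite !inE eqxx.
- move=> x y; rewrite !inE => /orP [/orP [/orP [/eqP->|/eqP->]|/eqP->]|/eqP->]
    /orP [/orP [/orP [/eqP->|/eqP->]|/eqP->]|/eqP->]; apply: tdist_row; lia.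
- by apply/set0Pn; exists (pt n a b); rewrite !inE eqxx.
- move=> x y; rewrite !inE => /orP [/orP [/orP [/eqP->|/eqP->]|/eqP->]|/eqP->]
    /orP [/orP [/orP [/eqP->|/eqP->]|/eqP->]|/eqP->]; apply: tdist_col; lia.
Qed.

Lemma cd_t2 n (x : 'Z_n) (m a j : nat) (w : int) : (1 < n)%N -> (a < n)%N -> (j <= n)%N ->
  m = (a + j)%N -> cdist n x (pt n w m).2 = cyc n (tof n a (val x) - j%:Z).
Proof.
move=> hn ha hj hm.
change (cdist n x ((Posz m)%:~R) = cyc n (tof n a (val x) - j%:Z)).
exact: (@cd_t n x m a j 0).
Qed.

Lemma cd_snd2 n (y : 'Z_n) (z : int) (b : nat) : (1 < n)%N -> (b < n)%N ->
  cdist n y (pt n b z).1 = minn ((val y - b) + (b - val y))%N (n - ((val y - b) + (b - val y)))%N.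
Proof.
move=> hn hb.
change (cdist n y ((Posz b)%:~R) = minn ((val y - b) + (b - val y))%N (n - ((val y - b) + (b - val y)))%N).
exact: (@cd_snd n y 0 b).
Qed.

Lemma M_row3 n k (a b : nat) (S' : {set Tor n}) : n = (3 * k)%N -> (2 <= k)%N ->
  (a < n)%N -> (b < n)%N -> tsimplex n k S' ->
  [set pt n a b; pt n (a + k)%N b; pt n (a + 2 * k)%N b] \subset S' ->
  S' \subset [set pt n a b; pt n (a + k)%N b; pt n (a + 2 * k)%N b].
Proof.
move=> hn hk ha hb /tsimplexP [_ td] sub.
have hn1 : (1 < n)%N by lia.
apply/subsetP => s sS; apply: mem3.
have i0 : pt n a b \in S' by apply: (subsetP sub); rewrite !inE eqxx ?orbT.
have i1 : pt n (a + k)%N b \in S' by apply: (subsetP sub); rewrite !inE eqxx ?orbT.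
have i2 : pt n (a + 2 * k)%N b \in S' by apply: (subsetP sub); rewrite !inE eqxx ?orbT.
have d0 := td s _ sS i0; have d1 := td s _ sS i1; have d2 := td s _ sS i2.
rewrite /tdist in d0 d1 d2.
rewrite (@cd_t n s.1 a a 0 b hn1 ha ltac:(lia) ltac:(lia)) in d0.
rewrite (@cd_t n s.1 (a + k) a k b hn1 ha ltac:(lia) ltac:(lia)) in d1.
rewrite (@cd_t n s.1 (a + 2 * k) a (2 * k) b hn1 ha ltac:(lia) ltac:(lia)) in d2.
rewrite !(@cd_snd n s.2 _ b hn1 hb) in d0 d1 d2.
have [t0 t1] := tof_b ha (Zval s.1 hn1).
have hy := Zval s.2 hn1.
have hx := Zval s.1 hn1.
have key : (val s.2 = b)%N /\ (tof n a (val s.1) = 0 \/ tof n a (val s.1) = k%:Z \/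
                              tof n a (val s.1) = (2 * k)%N%:Z).
  rewrite /cyc in d0 d1 d2.
  move: (tof n a (val s.1)) t0 t1 d0 d1 d2 => t t0 t1 d0 d1 d2.
  move: (val s.2) hy d0 d1 d2 => y hy d0 d1 d2.
  clear -hn hk hb t0 t1 d0 d1 d2 hy; lia.
case: key => ey; rewrite /tof; case: leqP => h et.
- case: et => [et|[et|et]]; [left|right; left|right; right]; apply: pt_of => //; simpl in *; lia.
- case: et => [et|[et|et]]; [left|right; left|right; right]; apply: pt_of => //; simpl in *; lia.
Qed.

Lemma M_col3 n k (a b : nat) (S' : {set Tor n}) : n = (3 * k)%N -> (2 <= k)%N ->
  (a < n)%N -> (b < n)%N -> tsimplex n k S' ->
  [set pt n a b; pt n a (b + k)%N; pt n a (b + 2 * k)%N] \subset S' ->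
  S' \subset [set pt n a b; pt n a (b + k)%N; pt n a (b + 2 * k)%N].
Proof.
move=> hn hk ha hb /tsimplexP [_ td] sub.
have hn1 : (1 < n)%N by lia.
apply/subsetP => s sS; apply: mem3.
have i0 : pt n a b \in S' by apply: (subsetP sub); rewrite !inE eqxx ?orbT.
have i1 : pt n a (b + k)%N \in S' by apply: (subsetP sub); rewrite !inE eqxx ?orbT.
have i2 : pt n a (b + 2 * k)%N \in S' by apply: (subsetP sub); rewrite !inE eqxx ?orbT.
have d0 := td s _ sS i0; have d1 := td s _ sS i1; have d2 := td s _ sS i2.
rewrite /tdist in d0 d1 d2.
rewrite (@cd_t2 n s.2 b b 0 a hn1 hb ltac:(lia) ltac:(lia)) in d0.
rewrite (@cd_t2 n s.2 (b + k) b k a hn1 hb ltac:(lia) ltac:(lia)) in d1.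
rewrite (@cd_t2 n s.2 (b + 2 * k) b (2 * k) a hn1 hb ltac:(lia) ltac:(lia)) in d2.
rewrite !(@cd_snd2 n s.1 _ a hn1 ha) in d0 d1 d2.
have [t0 t1] := tof_b hb (Zval s.2 hn1).
have hy := Zval s.1 hn1.
have hx := Zval s.2 hn1.
have key : (val s.1 = a)%N /\ (tof n b (val s.2) = 0 \/ tof n b (val s.2) = k%:Z \/
                              tof n b (val s.2) = (2 * k)%N%:Z).
  rewrite /cyc in d0 d1 d2.
  move: (tof n b (val s.2)) t0 t1 d0 d1 d2 => t t0 t1 d0 d1 d2.
  move: (val s.1) hy d0 d1 d2 => y hy d0 d1 d2.
  clear -hn hk ha t0 t1 d0 d1 d2 hy; lia.
case: key => ey; rewrite /tof; case: leqP => h et.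
- case: et => [et|[et|et]]; [left|right; left|right; right]; apply: pt_of => //; simpl in *; lia.
- case: et => [et|[et|et]]; [left|right; left|right; right]; apply: pt_of => //; simpl in *; lia.
Qed.

Lemma M_row4 n k (a b : nat) (S' : {set Tor n}) : n = (3 * k - 1)%N -> (3 <= k)%N ->
  (a < n)%N -> (b < n)%N -> tsimplex n k S' ->
  [set pt n a b; pt n (a + k)%N b; pt n (a + 2 * k - 1)%N b; pt n (a + 2 * k)%N b] \subset S' ->
  S' \subset [set pt n a b; pt n (a + k)%N b; pt n (a + 2 * k - 1)%N b; pt n (a + 2 * k)%N b].
Proof.
move=> hn hk ha hb /tsimplexP [_ td] sub.
have hn1 : (1 < n)%N by lia.
apply/subsetP => s sS; apply: mem4.
have i0 : pt n a b \in S' by apply: (subsetP sub); rewrite !inE eqxx ?orbT.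
have i1 : pt n (a + k)%N b \in S' by apply: (subsetP sub); rewrite !inE eqxx ?orbT.
have i2 : pt n (a + 2 * k - 1)%N b \in S' by apply: (subsetP sub); rewrite !inE eqxx ?orbT.
have i3 : pt n (a + 2 * k)%N b \in S' by apply: (subsetP sub); rewrite !inE eqxx ?orbT.
have d0 := td s _ sS i0; have d1 := td s _ sS i1; have d2 := td s _ sS i2.
have d3 := td s _ sS i3.
rewrite /tdist in d0 d1 d2 d3.
rewrite (@cd_t n s.1 a a 0 b hn1 ha ltac:(lia) ltac:(lia)) in d0.
rewrite (@cd_t n s.1 (a + k) a k b hn1 ha ltac:(lia) ltac:(lia)) in d1.
rewrite (@cd_t n s.1 (a + 2 * k - 1) a (2 * k - 1) b hn1 ha ltac:(lia) ltac:(lia)) in d2.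
rewrite (@cd_t n s.1 (a + 2 * k) a (2 * k) b hn1 ha ltac:(lia) ltac:(lia)) in d3.
rewrite !(@cd_snd n s.2 _ b hn1 hb) in d0 d1 d2 d3.
have [t0 t1] := tof_b ha (Zval s.1 hn1).
have hy := Zval s.2 hn1.
have hx := Zval s.1 hn1.
have key : (val s.2 = b)%N /\ (tof n a (val s.1) = 0 \/ tof n a (val s.1) = k%:Z \/
     tof n a (val s.1) = (2 * k - 1)%N%:Z \/ tof n a (val s.1) = (2 * k)%N%:Z).
  rewrite /cyc in d0 d1 d2 d3.
  move: (tof n a (val s.1)) t0 t1 d0 d1 d2 d3 => t t0 t1 d0 d1 d2 d3.
  move: (val s.2) hy d0 d1 d2 d3 => y hy d0 d1 d2 d3.
  have E0 : minn (y - b + (b - y)) (n - (y - b + (b - y))) = 0%N.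
    move: (minn (y - b + (b - y)) (n - (y - b + (b - y)))) d0 d1 d2 d3 => E d0 d1 d2 d3.
    clear -hn hk t0 t1 d0 d1 d2 d3; lia.
  rewrite E0 in d0 d1 d2 d3.
  split; first by clear -hn hk hb hy E0; lia.
  clear -hn hk t0 t1 d0 d1 d2 d3; lia.
case: key => ey; rewrite /tof; case: leqP => h et.
- case: et => [et|[et|[et|et]]]; [left|right; left|right; right; left|right; right; right];
    apply: pt_of => //; simpl in *; lia.
- case: et => [et|[et|[et|et]]]; [left|right; left|right; right; left|right; right; right];
    apply: pt_of => //; simpl in *; lia.
Qed.

Lemma M_col4 n k (a b : nat) (S' : {set Tor n}) : n = (3 * k - 1)%N -> (3 <= k)%N ->
  (a < n)%N -> (b < n)%N -> tsimplex n k S' ->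
  [set pt n a b; pt n a (b + k)%N; pt n a (b + 2 * k - 1)%N; pt n a (b + 2 * k)%N] \subset S' ->
  S' \subset [set pt n a b; pt n a (b + k)%N; pt n a (b + 2 * k - 1)%N; pt n a (b + 2 * k)%N].
Proof.
move=> hn hk ha hb /tsimplexP [_ td] sub.
have hn1 : (1 < n)%N by lia.
apply/subsetP => s sS; apply: mem4.
have i0 : pt n a b \in S' by apply: (subsetP sub); rewrite !inE eqxx ?orbT.
have i1 : pt n a (b + k)%N \in S' by apply: (subsetP sub); rewrite !inE eqxx ?orbT.
have i2 : pt n a (b + 2 * k - 1)%N \in S' by apply: (subsetP sub); rewrite !inE eqxx ?orbT.
have i3 : pt n a (b + 2 * k)%N \in S' by apply: (subsetP sub); rewrite !inE eqxx ?orbT.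
have d0 := td s _ sS i0; have d1 := td s _ sS i1; have d2 := td s _ sS i2.
have d3 := td s _ sS i3.
rewrite /tdist in d0 d1 d2 d3.
rewrite (@cd_t2 n s.2 b b 0 a hn1 hb ltac:(lia) ltac:(lia)) in d0.
rewrite (@cd_t2 n s.2 (b + k) b k a hn1 hb ltac:(lia) ltac:(lia)) in d1.
rewrite (@cd_t2 n s.2 (b + 2 * k - 1) b (2 * k - 1) a hn1 hb ltac:(lia) ltac:(lia)) in d2.
rewrite (@cd_t2 n s.2 (b + 2 * k) b (2 * k) a hn1 hb ltac:(lia) ltac:(lia)) in d3.
rewrite !(@cd_snd2 n s.1 _ a hn1 ha) in d0 d1 d2 d3.
have [t0 t1] := tof_b hb (Zval s.2 hn1).
have hy := Zval s.1 hn1.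
have hx := Zval s.2 hn1.
have key : (val s.1 = a)%N /\ (tof n b (val s.2) = 0 \/ tof n b (val s.2) = k%:Z \/
     tof n b (val s.2) = (2 * k - 1)%N%:Z \/ tof n b (val s.2) = (2 * k)%N%:Z).
  rewrite /cyc in d0 d1 d2 d3.
  move: (tof n b (val s.2)) t0 t1 d0 d1 d2 d3 => t t0 t1 d0 d1 d2 d3.
  move: (val s.1) hy d0 d1 d2 d3 => y hy d0 d1 d2 d3.
  have E0 : minn (y - a + (a - y)) (n - (y - a + (a - y))) = 0%N.
    move: (minn (y - a + (a - y)) (n - (y - a + (a - y)))) d0 d1 d2 d3 => E d0 d1 d2 d3.
    clear -hn hk t0 t1 d0 d1 d2 d3; lia.
  rewrite E0 in d0 d1 d2 d3.
  split; first by clear -hn hk ha hy E0; lia.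
  clear -hn hk t0 t1 d0 d1 d2 d3; lia.
case: key => ey; rewrite /tof; case: leqP => h et.
- case: et => [et|[et|[et|et]]]; [left|right; left|right; right; left|right; right; right];
    apply: pt_of => //; simpl in *; lia.
- case: et => [et|[et|[et|et]]]; [left|right; left|right; right; left|right; right; right];
    apply: pt_of => //; simpl in *; lia.
Qed.

Lemma M_box3 n k u0 v0 (S' : {set Tor n}) : n = (3 * k)%N -> (2 <= k)%N ->
  tsimplex n k S' -> pbox n k u0 v0 \subset S' -> S' \subset pbox n k u0 v0.
Proof.
move=> hn hk hS sub.
have hn1 : (1 < n)%N by lia.
have [Y [PY sub']] := A3 hn hk hS.
have sub2 := subset_trans sub sub'.
case: PY => [[uB [vB eY]]|[a [b [ha [hb [eY|eY]]]]]]; rewrite eY in sub' sub2.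
- apply: subset_trans sub' _; apply: C_bb => //; lia.
- by exfalso; apply: (C_bN_row hn1 hk sub2 (@row3_snd n _ _ _ b)).
- by exfalso; apply: (C_bN_col hn1 hk sub2 (@col3_fst n _ _ _ a)).
Qed.

Lemma M_box4 n k u0 v0 (S' : {set Tor n}) : n = (3 * k - 1)%N -> (3 <= k)%N ->
  tsimplex n k S' -> pbox n k u0 v0 \subset S' -> S' \subset pbox n k u0 v0.
Proof.
move=> hn hk hS sub.
have hn1 : (1 < n)%N by lia.
have hk2 : (2 <= k)%N by lia.
have [Y [PY sub']] := A4 hn hk hS.
have sub2 := subset_trans sub sub'.
case: PY => [[uB [vB eY]]|[a [b [ha [hb [eY|eY]]]]]]; rewrite eY in sub' sub2.
- apply: subset_trans sub' _; apply: C_bb => //; lia.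
- by exfalso; apply: (C_bN_row hn1 hk2 sub2 (@row4_snd n _ _ _ _ b)).
- by exfalso; apply: (C_bN_col hn1 hk2 sub2 (@col4_fst n _ _ _ _ a)).
Qed.

Lemma part1 k : (2 <= k)%N -> forall S : {set Tor (3 * k)},
  tmaximal (3 * k) k S <-> (Mset (3 * k) k S \/ N3k k S).
Proof.
move=> hk S.
have hn1 : (1 < 3 * k)%N by lia.
have hk1 : (1 <= k)%N by lia.
have hB : forall X, PF3 (3 * k) k X -> tsimplex (3 * k) k X.
  move=> X [[u0 [v0 ->]]|hN]; first exact: B_box.
  exact: (B_N3 (erefl _) hk1 hN).
have hM : forall X S', PF3 (3 * k) k X -> tsimplex (3 * k) k S' -> X \subset S' -> S' \subset X.
  move=> X S' [[u0 [v0 ->]]|[a [b [ha [hb [->|->]]]]]] hS sub.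
  - exact: (M_box3 (erefl _) hk hS sub).
  - exact: (M_row3 (erefl _) hk ha hb hS sub).
  - exact: (M_col3 (erefl _) hk ha hb hS sub).
have fr := @frame (3 * k) k (PF3 (3 * k) k) (fun S hS => A3 (erefl _) hk hS) hB hM S.
rewrite fr /PF3.
have hMs := @Mset_box (3 * k) k S hk1.
split; case=> h.
- by left; apply/hMs.
- by right; exact: h.
- by left; apply/hMs.
- by right; exact: h.
Qed.

Lemma part2 k : (3 <= k)%N -> forall S : {set Tor (3 * k - 1)},
  tmaximal (3 * k - 1) k S <-> (Mset (3 * k - 1) k S \/ N3k1 k S).
Proof.
move=> hk S.
have hn1 : (1 < 3 * k - 1)%N by lia.
have hk1 : (1 <= k)%N by lia.
have hB : forall X, PF4 (3 * k - 1) k X -> tsimplex (3 * k - 1) k X.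
  move=> X [[u0 [v0 ->]]|hN]; first exact: B_box.
  exact: (B_N4 (erefl _) hk hN).
have hM : forall X S', PF4 (3 * k - 1) k X -> tsimplex (3 * k - 1) k S' ->
    X \subset S' -> S' \subset X.
  move=> X S' [[u0 [v0 ->]]|[a [b [ha [hb [->|->]]]]]] hS sub.
  - exact: (M_box4 (erefl _) hk hS sub).
  - exact: (M_row4 (erefl _) hk ha hb hS sub).
  - exact: (M_col4 (erefl _) hk ha hb hS sub).
have fr := @frame (3 * k - 1) k (PF4 (3 * k - 1) k) (fun S hS => A4 (erefl _) hk hS) hB hM S.
rewrite fr /PF4.
have hMs := @Mset_box (3 * k - 1) k S hk1.
split; case=> h.
- by left; apply/hMs.
- right; case: h => a [b [ha [hb h]]]; exists a, b.
  by split; [lia | split; [lia | exact: h]].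
- by left; apply/hMs.
- right; case: h => a [b [ha [hb h]]]; exists a, b.
  by split; [lia | split; [lia | exact: h]].
Qed.

Close Scope ring_scope.

Theorem lemma5p5 :
  (forall k : nat, 2 <= k ->
     forall S : {set Tor (3 * k)},
       tmaximal (3 * k) k S <-> (Mset (3 * k) k S \/ N3k k S)) /\
  (forall k : nat, 3 <= k ->
     forall S : {set Tor (3 * k - 1)},
       tmaximal (3 * k - 1) k S <-> (Mset (3 * k - 1) k S \/ N3k1 k S)).
Proof. split; [exact: part1 | exact: part2]. Qed.
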